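(* In the PIR-PSI under a storage constraint problem described in the context, fix $N$, $K$, the cache size $S$ and the number of accessed messages $M$ with $S\le M\le K$. Among all caching schemes $(r_1,\dots,r_M)\in[0,1]^M$ with $\sum_{i=1}^M r_i=S$, the uniform caching scheme $r_1=\dots=r_M=S/M$ achieves the lowest optimal normalized download cost $D^*$.
   Context: Model: $N$ non-communicating databases each store the same $K$ independent messages $W_1,\dots,W_K$ of $L$ symbols each. The user has a cache of $SL$ symbols. It accesses a random set $\mathbb{H}$ of $M$ messages ($S\le M\le K$) and caches the first $Lr_i$ symbols of the $i$-th accessed message, $\sum_i r_i=S$; the databases know $M$ and $(r_1,\dots,r_M)$ but not $\mathbb{H}$. The user wants message $W_\theta$ and sends queries (independent of the messages) to the databases, each of which answers with a deterministic function of its query and the messages; the user must decode $W_\theta$ from the answers, queries and cached content with error entropy $o(L)$, and for each database the joint distribution of (its query, its answer, all messages) must not depend on $(\theta,\mathbb{H})$ (over all $\theta\in[K]$ and all $M$-subsets $\mathbb{H}$). The download is $D=\sum_n H(A_n)$ and $D^*=\inf D/L$ over achievable schemes. For a caching scheme $(r_1,\dots,r_M)$ ordered so that $r_1\ge\dots\ge r_M$, one has $D^*=1+\frac1N+\dots+\frac1{N^{K-1-M}}+\frac{1-r_M}{N^{K-M}}+\frac{1-r_{M-1}}{N^{K-M+1}}+\dots+\frac{1-r_1}{N^{K-1}}$. *)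

(* Defs.v *)
From mathcomp Require Import all_boot all_order all_algebra.
Set Implicit Arguments. Unset Strict Implicit. Unset Printing Implicit Defensive.
Import Order.TTheory GRing.Theory Num.Theory.
Local Open Scope ring_scope.

(* Optimal normalized download cost D^* of PIR-PSI under a storage constraint
   for the caching scheme r = (r_1,...,r_M), given by the closed form of the
   context: sort r decreasingly (s_0 >= ... >= s_{M-1}, s_{i} = r_{(i+1)}), then
   D^* = sum_{j=0}^{K-M-1} 1/N^j + sum_{i=0}^{M-1} (1 - s_i)/N^{K-1-i}. *)
Definition Dstar (R : realFieldType) (N K M : nat) (r : 'I_M -> R) : R :=
  let s := sort (fun x y : R => y <= x) [seq r i | i <- enum 'I_M] in
  \sum_(j < K - M) (N%:R ^+ j)^-1
  + \sum_(i < M) (1 - nth 0 s i) / N%:R ^+ (K - 1 - i).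

(* Main.v *)
Require Import Defs.
From mathcomp Require Import all_boot all_order all_algebra.
From mathcomp Require Import ring lra.
Import Order.TTheory GRing.Theory Num.Theory.
Local Open Scope ring_scope.

Lemma cheb (R : realFieldType) (M : nat) (f g : 'I_M -> R) :
  (forall i j, (f i - f j) * (g i - g j) <= 0) ->
  M%:R * \sum_(i < M) f i * g i <= (\sum_(i < M) f i) * (\sum_(i < M) g i).
Proof.
move=> H.
have H0 : \sum_(i < M) \sum_(j < M) (f i - f j) * (g i - g j) <= 0.
  by apply: sumr_le0 => i _; apply: sumr_le0 => j _; apply: H.
have E : \sum_(i < M) \sum_(j < M) (f i - f j) * (g i - g j) =
   (M%:R * \sum_(i < M) f i * g i) *+ 2 - ((\sum_(i < M) f i) * (\sum_(i < M) g i)) *+ 2.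
  transitivity (\sum_(i < M) \sum_(j < M)
     ((f i * g i + f j * g j) - (f i * g j + f j * g i))).
    by apply: eq_bigr => i _; apply: eq_bigr => j _; ring.
  rewrite (eq_bigr (fun i => \sum_(j < M) (f i * g i + f j * g j)
      - \sum_(j < M) (f i * g j + f j * g i))); last by move=> i _; rewrite sumrB.
  rewrite sumrB.
  have A : \sum_(i < M) \sum_(j < M) (f i * g i + f j * g j) =
      (M%:R * \sum_(i < M) f i * g i) *+ 2.
    rewrite (eq_bigr (fun i => f i * g i *+ M + \sum_(j < M) f j * g j)); last first.
      by move=> i _; rewrite big_split /= sumr_const card_ord.
    by rewrite big_split /= sumr_const card_ord sumrMnl mulr_natl mulr2n.
  have B : \sum_(i < M) \sum_(j < M) (f i * g j + f j * g i) =
      ((\sum_(i < M) f i) * (\sum_(i < M) g i)) *+ 2.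
    rewrite (eq_bigr (fun i => f i * \sum_(j < M) g j + g i * \sum_(j < M) f j)); last first.
      move=> i _; rewrite big_split /= !mulr_sumr; congr (_ + _).
      by apply: eq_bigr => j _; rewrite mulrC.
    rewrite big_split /= -!mulr_suml mulr2n; congr (_ + _); exact: mulrC.
  by rewrite A B.
by move: H0; rewrite E subr_le0 lerMn2r.
Qed.


Theorem corollary1 (R : realFieldType) (N K M : nat) (S : R) (r : 'I_M -> R) :
  (0 < N)%N -> (M <= K)%N -> 0 <= S -> S <= M%:R ->
  (forall i, 0 <= r i <= 1) -> \sum_(i < M) r i = S ->
  Dstar N K (fun _ : 'I_M => S / M%:R) <= Dstar N K r.
Proof.
move=> N0 MK S0 SM r01 hr.
rewrite /Dstar /=.
set leT := (fun x y : R => y <= x).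
have leT_tr : transitive leT by move=> b a c h1 h2; exact: le_trans h2 h1.
have leT_tot : total leT by move=> x y; exact: le_total.
set c := S / M%:R.
set su := sort leT [seq c | _ <- _].
set s := sort leT _.
rewrite lerD2l.
have sz : size s = M by rewrite size_sort size_map size_enum_ord.
have hsu : forall i : 'I_M, nth 0 su i = c.
  move=> i.
  have : nth 0 su i \in su by apply: mem_nth; rewrite size_sort size_map size_enum_ord.
  by rewrite mem_sort => /mapP [j _ ->].
rewrite (eq_bigr (fun i : 'I_M => (1 - c) / N%:R ^+ (K - 1 - i))); last first.
  by move=> i _; rewrite hsu.
pose w := fun i : 'I_M => (N%:R ^+ (K - 1 - i) : R)^-1.
have E1 : \sum_(i < M) (1 - c) / N%:R ^+ (K - 1 - i) =
   \sum_(i < M) w i - c * \sum_(i < M) w i.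
  rewrite mulr_sumr -sumrB; apply: eq_bigr => i _; rewrite /w; ring.
have E2 : \sum_(i < M) (1 - nth 0 s i) / N%:R ^+ (K - 1 - i) =
   \sum_(i < M) w i - \sum_(i < M) nth 0 s i * w i.
  rewrite -sumrB; apply: eq_bigr => i _; rewrite /w; ring.
rewrite E1 E2 lerD2l lerN2.
have sumS : \sum_(i < M) nth 0 s i = S.
  transitivity (\sum_(x <- s) x); first by rewrite (big_nth 0) sz big_mkord.
  rewrite -hr.
  by rewrite (perm_big _ (permEl (perm_sort leT _))) big_map big_enum.
have wpos : forall i : 'I_M, 0 < (N%:R ^+ (K - 1 - i) : R).
  by move=> i; apply: exprn_gt0; rewrite ltr0n.
have wmono : forall i j : 'I_M, (i <= j)%N -> w i <= w j.
  move=> i j ij; rewrite /w lef_pV2 ?posrE ?wpos //.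
  apply: ler_weXn2l; first by rewrite ler1n.
  exact: leq_sub2l.
have smono : forall i j : 'I_M, (i <= j)%N -> nth 0 s j <= nth 0 s i.
  move=> i j ij.
  have h := sorted_leq_nth leT_tr (fun x => le_refl x) 0
     (@sort_sorted _ leT leT_tot [seq r i | i <- enum 'I_M]).
  by apply: (h i j) => //; rewrite inE -/s sz ltn_ord.
have H : M%:R * \sum_(i < M) nth 0 s i * w i <= S * \sum_(i < M) w i.
  rewrite -sumS; apply: cheb => i j.
  case: (leqP i j) => ij.
    apply: mulr_ge0_le0; first by rewrite subr_ge0 smono.
    by rewrite subr_le0 wmono.
  apply: mulr_le0_ge0; first by rewrite subr_le0 smono // ltnW.
  by rewrite subr_ge0 wmono // ltnW.
case: (posnP M) => [M0|Mpos].
  by rewrite !big1 ?mulr0 // => i; have := ltn_ord i; rewrite {2}M0.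
by rewrite /c mulrAC ler_pdivlMr ?ltr0n // mulrC.
Qed.
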